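(* For $K\ge 1$ define $\mathcal{R}:\mathbb{R}^K\times[0,1]\to\mathbb{R}$ by \[ \mathcal{R}(a_{1},\dots,a_{K},x)=\sum_{k=1}^{K}a_{k}\sin(2\pi kx). \] For fixed $A>0$, $K\ge1$ and any $0<\epsilon<1$, there exists an MLP network $\tilde{\mathcal{R}}:\mathbb{R}^{K+1}\to\mathbb{R}$, consisting of dense layers and $\tanh$ as activation function, with $O(K^{2}+K\log^{2}(K\epsilon^{-1}))$ weights, for which \[ |\tilde{\mathcal{R}}(a_{1},\dots,a_{K},x)-\mathcal{R}(a_{1},\dots,a_{K},x)|\leq\epsilon \] for all $a_{1},\dots,a_{K}\in[-A,A]$ and $x\in[0,1]$.
   Context: An MLP (multilayer perceptron) network is a feed-forward composition of layers, each of the form $v_j=\sigma\circ(M_j v_{j-1}+b_j)$ with a matrix $M_j$ and bias vector $b_j$ and coordinate-wise nonlinearity $\sigma$ (here $\sigma=\tanh$); in some layers the bias and/or the nonlinearity may be omitted. The ''number of weights'' is the total number of parameters (entries of all $M_j$ and $b_j$). *)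

(* Defs.v *)
From HB Require Import structures.
From mathcomp Require Import all_boot all_order all_algebra.
From mathcomp Require Import all_classical all_reals all_analysis.
Set Implicit Arguments. Unset Strict Implicit. Unset Printing Implicit Defensive.
Import Order.TTheory GRing.Theory Num.Theory.
Local Open Scope ring_scope.

Definition tanh {R : realType} (x : R) : R :=
  (expR x - expR (- x)) / (expR x + expR (- x)).

Record layer (R : realType) (n m : nat) := Layer {
  lay_M : 'M[R]_(m, n);
  lay_b : option 'cV[R]_m;
  lay_act : bool }.

Definition eval_layer (R : realType) n m (L : layer R n m) (v : 'cV[R]_n) : 'cV[R]_m :=
  let w := lay_M L *m v + (if lay_b L is Some b then b else 0) in
  if lay_act L then map_mx tanh w else w.

Definition layer_weights (R : realType) n m (L : layer R n m) : nat :=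
  (m * n + (if lay_b L is Some _ then m else 0))%N.

Inductive mlp (R : realType) : nat -> nat -> Type :=
| mlp_one n m : layer R n m -> mlp R n m
| mlp_cons n m p : layer R n m -> mlp R m p -> mlp R n p.

Fixpoint eval_mlp (R : realType) n m (N : mlp R n m) : 'cV[R]_n -> 'cV[R]_m :=
  match N with
  | mlp_one _ _ L => eval_layer L
  | mlp_cons _ _ _ L N' => fun v => eval_mlp N' (eval_layer L v)
  end.

Fixpoint num_weights (R : realType) n m (N : mlp R n m) : nat :=
  match N with
  | mlp_one _ _ L => layer_weights L
  | mlp_cons _ _ _ L N' => (layer_weights L + num_weights N')%N
  end.

(* R(a_1,...,a_K,x) = sum_{k=1}^K a_k sin(2 pi k x); a_{k+1} = a k for k : 'I_K *)
Definition Rsum (R : realType) (K : nat) (a : 'I_K -> R) (x : R) : R :=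
  \sum_(k < K) a k * sin (2 * pi * (k.+1)%:R * x).

(* Main.v *)
Require Import Defs.
From HB Require Import structures.
From mathcomp Require Import all_boot all_order all_algebra.
From mathcomp Require Import all_classical all_reals all_analysis.
From mathcomp Require Import ring lra zify.
Import Order.TTheory GRing.Theory Num.Theory.
Local Open Scope ring_scope.

Module Aux.
Import numFieldNormedType.Exports.
Local Open Scope classical_set_scope.
Local Open Scope ring_scope.

Section ExpIneq.
Variable R : realType.
Implicit Types x y s t : R.

Lemma expR_le_inv y : y < 1 -> expR y * (1 - y) <= 1.
Proof.
move=> hy; have := expR_ge1Dx (- y); rewrite expRN => h.
have he := expR_gt0 y.
have : (1 - y) * expR y <= (expR y)^-1 * expR y by rewrite ler_pM2r.
by rewrite mulVf ?gt_eqF // mulrC.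
Qed.

Lemma expR_diff s t : `|expR t - expR s| <= Num.max (expR s) (expR t) * `|t - s|.
Proof.
wlog st : s t / s <= t.
  move=> H; case: (leP s t) => [/H//|/ltW ts].
  by rewrite distrC (distrC t) maxC; apply: H.
have hs := expR_gt0 s; have ht := expR_gt0 t.
have est : expR s <= expR t by rewrite ler_expR.
rewrite (max_idPr est) !ger0_norm ?subr_ge0 //.
have := expR_ge1Dx (s - t); rewrite expRB => h.
have : (1 + (s - t)) * expR t <= expR s / expR t * expR t by rewrite ler_pM2r.
rewrite mulfVK ?gt_eqF //; nra.
Qed.

Lemma expR_lip S s t : `|s| <= S -> `|t| <= S ->
  `|expR t - expR s| <= expR S * `|t - s|.
Proof.
move=> hs ht; apply: (le_trans (expR_diff s t)); apply: ler_wpM2r => //.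
rewrite ge_max !ler_expR; apply/andP; split.
- by apply: le_trans hs; rewrite ler_norm.
- by apply: le_trans ht; rewrite ler_norm.
Qed.

Lemma expR_sub1 y : `|y| <= 1/2 -> `|expR y - 1 - y| <= 2 * y ^+ 2.
Proof.
move=> hy; have h1 := expR_ge1Dx y.
have y1 : y < 1 by move: hy; rewrite ler_norml; lra.
have h2 := @expR_le_inv y y1.
have he := expR_gt0 y.
rewrite ger0_norm; last by lra.
move: hy; rewrite ler_norml => /andP[hy1 hy2].
(* e (1-y) <= 1  =>  e - 1 - y <= e*y - y = y (e - 1) *)
have : expR y - 1 - y <= y * (expR y - 1) by nra.
move=> h3.
have h4 : expR y - 1 - y <= 2 * y ^+ 2.
  case: (leP 0 y) => hy0.
  - have : expR y <= 2 by nra.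
    nra.
  - nra.
exact: h4.
Qed.

End ExpIneq.

Section Taylor.
Variable R : realType.
Implicit Types x y s t z : R.

Lemma pow_fact_le z n : 0 <= z -> z ^+ n / n`!%:R <= expR z.
Proof.
move=> hz; case: n => [|n].
  rewrite expr0 fact0 divr1; have := expR_ge1Dx z; lra.
have := expR_ge1Dxn n hz; lra.
Qed.

Lemma e_ge2 : 2 <= expR 1 :> R.
Proof. have := expR_ge1Dx (1 : R); lra. Qed.

Lemma sin_coeff_bound y n :
  `|sin_coeff y n| <= expR (expR 1 * `|y|) * expR (- n%:R).
Proof.
rewrite /sin_coeff /=.
have hf : 0 < n`!%:R :> R by rewrite ltr0n fact_gt0.
have -> : (odd n)%:R * (-1) ^+ n.-1./2 * y ^+ n / n`!%:R =
   ((odd n)%:R * (-1) ^+ n.-1./2) * (y ^+ n / n`!%:R) by rewrite !mulrA.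
rewrite normrM.
have h1 : `|(odd n)%:R * (-1) ^+ n.-1./2| <= 1 :> R.
  rewrite normrM normrX normrN normr1 expr1n mulr1 normr_nat.
  by case: odd.
have h2 : `|y ^+ n / n`!%:R| = (expR 1 * `|y|) ^+ n / n`!%:R * expR (- n%:R).
  rewrite normrM normrX normfV normr_nat exprMn -expRM_natl mulr1.
  have E := expRxMexpNx_1 (n%:R : R).
  transitivity ((expR n%:R * expR (1 *- n)) * (`|y| ^+ n / n`!%:R)).
    by rewrite E mul1r.
  ring.
rewrite h2.
have h3 := @pow_fact_le _ n (mulr_ge0 (expR_ge0 1) (normr_ge0 y)).
have h4 := expR_gt0 (- n%:R : R).
have h5 : 0 <= (expR 1 * `|y|) ^+ n / n`!%:R * expR (- n%:R).
  apply: mulr_ge0 => //; apply: divr_ge0 => //; apply: exprn_ge0; apply: mulr_ge0 => //.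
have h6 : (expR 1 * `|y|) ^+ n / n`!%:R * expR (- n%:R) <= expR (expR 1 * `|y|) * expR (- n%:R).
  by rewrite ler_pM2r.
have h7 : 0 <= `|(odd n)%:R * (-1) ^+ n.-1./2| :> R by [].
nra.
Qed.

Lemma geom_sum N j :
  \sum_(N <= n < N + j) expR (- n%:R) <= 2 * expR (- N%:R) - 2 * expR (- (N + j)%:R) :> R.
Proof.
elim: j => [|j IH].
  by rewrite addn0 big_geq // subrr.
rewrite addnS big_nat_recr /=; last by rewrite leq_addr.
have e : expR (- (N + j).+1%:R) = expR (- (N + j)%:R) * expR (-1) :> R.
  by rewrite -expRD; congr expR; rewrite -addn1 natrD; ring.
rewrite e.
have hr : expR (-1) <= 1/2 :> R.
  have E := expRxMexpNx_1 (1:R); have := e_ge2; have := expR_gt0 (-1:R).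
  nra.
have hp := expR_gt0 (- (N + j)%:R : R).
have hp2 := expR_gt0 (-1 : R).
nra.
Qed.

Lemma sin_taylor y N :
  `|sin y - series (sin_coeff y) N| <= 2 * expR (expR 1 * `|y| - N%:R).
Proof.
set b := 2 * expR (expR 1 * `|y| - N%:R).
have key : forall M, (N <= M)%N -> `|series (sin_coeff y) M - series (sin_coeff y) N| <= b.
  move=> M hM; rewrite -(subnK hM) series_addn addrAC subrr add0r.
  set j := (M - N)%N.
  apply: (le_trans (ler_norm_sum _ _ _)).
  apply: (le_trans (ler_sum _ (fun i _ => sin_coeff_bound y i))).
  rewrite -mulr_sumr addnC.
  apply: (le_trans (ler_wpM2l (expR_ge0 _) (geom_sum N j))).
  have hp := expR_gt0 (- (N + j)%:R : R).
  rewrite /b expRD.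
  have he := expR_gt0 (expR 1 * `|y|).
  nra.
have cv : cvgn (series (sin_coeff y)) := @is_cvg_series_sin_coeff R y.
have hnear : \forall M \near \oo, `|series (sin_coeff y) M - series (sin_coeff y) N| <= b.
  by exists N => // M /= hM; apply: key.
rewrite -[sin y]/(@sin R y) unlock.
rewrite ler_norml; apply/andP; split.
- rewrite lerBrDr; apply: limr_ge => //.
  apply: filterS hnear => M; rewrite ler_norml => /andP[h1 h2]; lra.
- rewrite lerBlDr; apply: limr_le => //.
  apply: filterS hnear => M; rewrite ler_norml => /andP[h1 h2]; lra.
Qed.

End Taylor.

Section Gadget.
Variable R : realType.
Implicit Types u v c U eta g S x y : R.

Lemma gadget u c :
  `|expR (2 * c) / 2 * (1 + tanh (u / 2 - c)) - expR u| <= expR (2 * u - 2 * c).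
Proof.
rewrite /tanh.
set p := expR (u / 2 - c).
set m := expR (- (u / 2 - c)).
have hp : 0 < p by apply: expR_gt0.
have hm : 0 < m by apply: expR_gt0.
have pm : p * m = 1 by rewrite /p /m expRxMexpNx_1.
set E := expR (2 * c).
have hE : 0 < E by apply: expR_gt0.
have eu : expR u = E * p ^+ 2.
  by rewrite /E /p -expRM_natl -expRD; congr expR; rewrite [_%:R]/=; field.
have e2 : expR (2 * u - 2 * c) = E * p ^+ 4.
  by rewrite /E /p -expRM_natl -expRD; congr expR; rewrite [_%:R]/=; field.
rewrite eu e2.
have mE : m = p^-1 by apply: (mulfI (lt0r_neq0 hp)); rewrite pm divff ?gt_eqF.
rewrite mE.
have hp2 : 0 < p ^+ 2 + 1 by nra.
have -> : E / 2 * (1 + (p - p^-1) / (p + p^-1)) - E * p ^+ 2 = - (E * p ^+ 4 / (p ^+ 2 + 1)).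
  have h1 : p + p^-1 != 0 by apply: lt0r_neq0; rewrite addr_gt0 // invr_gt0.
  have h2 : p ^+ 2 + 1 != 0 by apply: lt0r_neq0.
  have h3 : p != 0 by apply: lt0r_neq0.
  by field; rewrite h2 h3.
have h4 : 0 < E * p ^+ 4 by apply: mulr_gt0 => //; apply: exprn_gt0.
have h5 : 0 <= E * p ^+ 4 / (p ^+ 2 + 1) by apply: divr_ge0; lra.
have h6 : E * p ^+ 4 / (p ^+ 2 + 1) <= E * p ^+ 4.
  by rewrite ler_pdivrMr //; nra.
rewrite ler_norml; apply/andP; split; lra.
Qed.

Lemma gadget_b U u c eta : `|u| <= U -> 0 < eta -> c = U - ln eta / 2 ->
  `|expR (2 * c) / 2 * (1 + tanh (u / 2 - c)) - expR u| <= eta.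
Proof.
move=> hu he hc; apply: (le_trans (gadget u c)).
have : 2 * u - 2 * c <= ln eta.
  rewrite hc; move: hu; rewrite ler_norml => /andP[h1 h2]; lra.
rewrite -ler_expR lnK //; by rewrite posrE.
Qed.

End Gadget.

Section Prod.
Variable R : realType.
Implicit Types u v c U eta g S x y B : R.

Definition Pi g u v : R := (expR (g * (u + v)) - expR (g * u) - expR (g * v) + 1) / g ^+ 2.

Lemma Pi_fact g u v : 0 < g ->
  Pi g u v = (u + (expR (g * u) - 1 - g * u) / g) * (v + (expR (g * v) - 1 - g * v) / g).
Proof.
move=> hg; rewrite /Pi mulrDr expRD.
have hg0 : g != 0 by apply: lt0r_neq0.
by field.
Qed.

Lemma rem_bound g u B : 0 < g -> `|u| <= B -> g * B <= 1/2 ->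
  `|(expR (g * u) - 1 - g * u) / g| <= 2 * g * B ^+ 2.
Proof.
move=> hg hu hgB.
have hB : 0 <= B by apply: le_trans hu.
have h1 : `|g * u| <= 1/2.
  rewrite normrM gtr0_norm //; apply: le_trans hgB; by rewrite ler_pM2l.
have h2 := @expR_sub1 R _ h1.
rewrite normrM normfV (gtr0_norm hg) ler_pdivrMr //.
apply: (le_trans h2).
have : u ^+ 2 <= B ^+ 2 by move: hu; rewrite ler_norml => /andP[? ?]; nra.
move=> hu2; rewrite exprMn; nra.
Qed.

Lemma prod_err g u v B : 0 < g -> `|u| <= B -> `|v| <= B -> g * B <= 1/2 ->
  `|Pi g u v - u * v| <= 6 * g * B ^+ 3.
Proof.
move=> hg hu hv hgB; rewrite Pi_fact //.
have hB : 0 <= B by apply: le_trans hu.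
set ru := (expR (g * u) - 1 - g * u) / g.
set rv := (expR (g * v) - 1 - g * v) / g.
have hru := @rem_bound g u B hg hu hgB.
have hrv := @rem_bound g v B hg hv hgB.
have -> : (u + ru) * (v + rv) - u * v = u * rv + ru * (v + rv) by ring.
apply: (le_trans (ler_normD _ _)); rewrite [`|u * rv|]normrM [`|ru * _|]normrM.
have h1 : `|v + rv| <= 2 * B.
  apply: (le_trans (ler_normD _ _)).
  have : 2 * g * B ^+ 2 <= B by nra.
  lra.
have h2 : `|u| * `|rv| <= B * (2 * g * B ^+ 2) by apply: ler_pM.
have h3 : `|ru| * `|v + rv| <= (2 * g * B ^+ 2) * (2 * B) by apply: ler_pM.
have -> : 6 * g * B ^+ 3 = B * (2 * g * B ^+ 2) + (2 * g * B ^+ 2) * (2 * B) by ring.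
exact: lerD.
Qed.

Lemma lip_err g S u v u' v' : 0 < g ->
  `|g * (u + v)| <= S -> `|g * u| <= S -> `|g * v| <= S ->
  `|g * (u' + v')| <= S -> `|g * u'| <= S -> `|g * v'| <= S ->
  `|Pi g u' v' - Pi g u v| <= 2 * expR S / g * (`|u' - u| + `|v' - v|).
Proof.
move=> hg h1 h2 h3 h4 h5 h6.
have e1 := @expR_lip R _ _ _ h1 h4.
have e2 := @expR_lip R _ _ _ h2 h5.
have e3 := @expR_lip R _ _ _ h3 h6.
have hg0 : g != 0 by apply: lt0r_neq0.
have -> : Pi g u' v' - Pi g u v =
  ((expR (g * (u' + v')) - expR (g * (u + v))) - (expR (g * u') - expR (g * u))
   - (expR (g * v') - expR (g * v))) / g ^+ 2 by rewrite /Pi; field.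
rewrite normrM normfV normrX (gtr0_norm hg) ler_pdivrMr ?exprn_gt0 //.
have q1 : g * (u' + v') - g * (u + v) = g * ((u' - u) + (v' - v)) by ring.
have q2 : g * u' - g * u = g * (u' - u) by ring.
have q3 : g * v' - g * v = g * (v' - v) by ring.
rewrite q1 normrM (gtr0_norm hg) in e1.
rewrite q2 normrM (gtr0_norm hg) in e2.
rewrite q3 normrM (gtr0_norm hg) in e3.
move: e1 e2 e3.
have := ler_normD (u' - u) (v' - v).
set a := `|u' - u|; set b := `|v' - v|; set c := `|(u' - u) + (v' - v)|.
set E := expR S.
have hE : 0 < E by apply: expR_gt0.
set X := `|_ - _ - _|.
move=> hc e1 e2 e3.
have hX : X <= E * (g * c) + E * (g * a) + E * (g * b).
  rewrite /X; apply: (le_trans (ler_normB _ _)).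
  apply: lerD => //; apply: (le_trans (ler_normB _ _)); exact: lerD.
have : E * (g * c) <= E * (g * (a + b)) by rewrite ler_pM2l // ler_pM2l.
have : 2 * E / g * (a + b) * g ^+ 2 = 2 * E * g * (a + b) by field.
move=> ->; nra.
Qed.
End Prod.

Section Feat.
Variable R : realType.
Implicit Types u v c U eta g S x y B h : R.

Lemma p_err h l B At eta : 0 < h -> `|l| <= B -> h * B <= 1/2 ->
  `|At - expR (h * l)| <= eta ->
  `|(At - 1) / h - l| <= eta / h + 2 * h * B ^+ 2.
Proof.
move=> hh hl hB hA.
have hr := @rem_bound R h l B hh hl hB.
have -> : (At - 1) / h - l = (At - expR (h * l)) / h + (expR (h * l) - 1 - h * l) / h.
  by field; apply: lt0r_neq0.
apply: (le_trans (ler_normD _ _)); apply: lerD => //.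
by rewrite normrM normfV (gtr0_norm hh) ler_pM2r // invr_gt0.
Qed.

Lemma sum_bin_ext (N n : nat) (f : nat -> R) : (n < N)%N ->
  \sum_(i < N) 'C(n, i)%:R * f i = \sum_(i < n.+1) 'C(n, i)%:R * f i.
Proof.
move=> hn.
rewrite -(big_mkord xpredT (fun i => 'C(n, i)%:R * f i)).
rewrite -(big_mkord xpredT (fun i => 'C(n, i)%:R * f i)).
rewrite (big_cat_nat (leq0n n.+1) hn) /=.
rewrite [X in _ + X = _]big1_seq ?addr0 // => i /andP[_]; rewrite mem_index_iota => /andP[hi _].
by rewrite (bin_small hi) mul0r.
Qed.

Lemma binom_E (N n : nat) (E : R) : (n < N)%N ->
  \sum_(i < N) 'C(n, i)%:R * ((-1) ^+ (n - i) * E ^+ i) = (E - 1) ^+ n.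
Proof.
move=> hn; rewrite (@sum_bin_ext N n (fun i => (-1) ^+ (n - i) * E ^+ i)) // addrC exprDn.
by apply: eq_bigr => i _; rewrite mulr_natl.
Qed.

Lemma binom_2 (N n : nat) : (n < N)%N ->
  \sum_(i < N) 'C(n, i)%:R = 2 ^+ n :> R.
Proof.
move=> hn.
have := @sum_bin_ext N n (fun _ => 1) hn.
under eq_bigr do rewrite mulr1.
under [X in _ = X -> _]eq_bigr do rewrite mulr1.
move=> ->; rewrite (_ : 2 = 1 + 1) // exprDn.
by apply: eq_bigr => i _; rewrite !expr1n mulr1.
Qed.

Lemma powdiff (w x M : R) (n : nat) : `|w| <= M -> `|x| <= M ->
  `|w ^+ n - x ^+ n| <= n%:R * M ^+ n.-1 * `|w - x|.
Proof.
move=> hw hx; have hM : 0 <= M by apply: le_trans hw.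
rewrite subrXX normrM mulrC ler_wpM2r //.
apply: (le_trans (ler_norm_sum _ _ _)).
have -> : n%:R * M ^+ n.-1 = \sum_(i < n) M ^+ n.-1 by rewrite sumr_const card_ord mulr_natl.
apply: ler_sum => i _; rewrite normrM !normrX.
have -> : M ^+ n.-1 = M ^+ (n.-1 - i) * M ^+ i.
  by rewrite -exprD subnK //; have := ltn_ord i; lia.
apply: ler_pM; try apply: exprn_ge0 => //; apply: lerXn2r => //; rewrite nnegrE //.
Qed.

End Feat.

Section QErr.
Variable R : realType.

Lemma q_err (N n : nat) (h x eta : R) (Xt : nat -> R) : (n < N)%N -> 0 < h -> h <= 1/2 ->
  0 <= x <= 1 -> 0 <= eta ->
  (forall i, (i < N)%N -> `|Xt i - expR (i%:R * (h * x))| <= eta) ->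
  `|(h ^+ n)^-1 * (\sum_(i < N) 'C(n, i)%:R * ((-1) ^+ (n - i) * Xt i)) - x ^+ n|
    <= (h ^+ n)^-1 * 2 ^+ n * eta + n%:R * 2 ^+ n * h.
Proof.
move=> hn hh hh2 /andP[x0 x1] he hX.
set e := expR (h * x).
set w := (e - 1) / h.
have hw : (h ^+ n)^-1 * (\sum_(i < N) 'C(n, i)%:R * ((-1) ^+ (n - i) * e ^+ i)) = w ^+ n.
  by rewrite binom_E // /w exprMn exprVn mulrC.
have hpos : 0 < (h ^+ n)^-1 by rewrite invr_gt0 exprn_gt0.
have -> : (h ^+ n)^-1 * (\sum_(i < N) 'C(n, i)%:R * ((-1) ^+ (n - i) * Xt i)) - x ^+ n
  = (h ^+ n)^-1 * (\sum_(i < N) 'C(n, i)%:R * ((-1) ^+ (n - i) * (Xt i - e ^+ i)))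
    + (w ^+ n - x ^+ n).
  rewrite -hw.
  have -> : \sum_(i < N) 'C(n, i)%:R * ((-1) ^+ (n - i) * (Xt i - e ^+ i)) =
    \sum_(i < N) 'C(n, i)%:R * ((-1) ^+ (n - i) * Xt i) -
    \sum_(i < N) 'C(n, i)%:R * ((-1) ^+ (n - i) * e ^+ i).
    by rewrite -sumrB; apply: eq_bigr => i _; ring.
  ring.
apply: (le_trans (ler_normD _ _)); apply: lerD.
- rewrite normrM (gtr0_norm hpos) -mulrA ler_pM2l //.
  apply: (le_trans (ler_norm_sum _ _ _)).
  rewrite -(binom_2 R N n hn) mulr_suml.
  apply: ler_sum => i _.
  rewrite normrM normr_nat; apply: ler_wpM2l => //.
  rewrite normrM normrX normrN normr1 expr1n mul1r /e -expRM_natl.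
  exact: hX.
- have hr := @rem_bound R h x 1 hh.
  have hx1 : `|x| <= 1 by rewrite ger0_norm.
  have h12 : h * 1 <= 1/2 by lra.
  have hr' := hr hx1 h12.
  have hwx : w - x = (expR (h * x) - 1 - h * x) / h by rewrite /w /e; field; apply: lt0r_neq0.
  have hwx' : `|w - x| <= 2 * h by rewrite hwx; move: hr'; rewrite expr1n mulr1.
  have hw2 : `|w| <= 2.
    have -> : w = x + (w - x) by ring.
    apply: (le_trans (ler_normD _ _)); lra.
  have hx2 : `|x| <= 2 by lra.
  apply: (le_trans (@powdiff R w x 2 n hw2 hx2)).
  case: n hn {hw} hpos => [|n] hn hpos; first by rewrite mul0r !mul0r.
  rewrite /= exprS.
  have h2 : 0 <= n.+1%:R * 2 ^+ n :> R by apply: mulr_ge0 => //; apply: exprn_ge0.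
  have : n.+1%:R * 2 ^+ n * `|w - x| <= n.+1%:R * 2 ^+ n * (2 * h) by apply: ler_wpM2l.
  move=> H; apply: (le_trans H); rewrite le_eqVlt; apply/orP; left; apply/eqP; ring.
Qed.
End QErr.

Section Core.
Variable R : realType.
Implicit Types u v c U eta g S x y B h : R.

Definition Gd c s : R := expR (2 * c) / 2 * (1 + tanh (s / 2 - c)).

Definition pt h c1 (l : R) : R := (Gd c1 (h * l) - 1) / h.
Definition qt (N : nat) h c1 x (n : nat) : R :=
  (h ^+ n)^-1 * (\sum_(i < N) 'C(n, i)%:R * ((-1) ^+ (n - i) * Gd c1 (i%:R * (h * x)))).
Definition Fn (N : nat) h c1 g c2 (l x : R) (n : nat) : R :=
  let p := pt h c1 l in let q := qt N h c1 x n in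
  (Gd c2 (g * (p + q)) - Gd c2 (g * p) - Gd c2 (g * q) + 1) / g ^+ 2.

Lemma Fn_err (N n : nat) h c1 g c2 (l x : R) B delta eta1 eta2 U1 S eps :
  (n < N)%N -> 0 <= x <= 1 -> `|l| <= B - 2 -> 2 <= B ->
  0 < h -> h <= 1/2 -> h * B <= 1/2 -> 2 * h * B ^+ 2 <= delta / 2 ->
  n%:R * 2 ^+ n * h <= delta / 2 -> 0 <= delta <= 1 ->
  0 < eta1 -> eta1 / h <= delta / 2 -> (h ^+ n)^-1 * 2 ^+ n * eta1 <= delta / 2 ->
  h * B <= U1 -> N%:R * h <= U1 -> c1 = U1 - ln eta1 / 2 ->
  0 < g -> g * B <= 1/2 -> 6 * g * B ^+ 3 <= eps -> S = 2 * g * B ->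
  2 * expR S / g * (2 * delta) <= eps ->
  0 < eta2 -> c2 = S - ln eta2 / 2 -> 3 * eta2 / g ^+ 2 <= eps ->
  `|Fn N h c1 g c2 l x n - l * x ^+ n| <= 3 * eps.
Proof.
move=> hn hx hl hB2 hh hh2 hhB hhB2 hnh hd he1 he1h he1n hU1 hU2 hc1 hg hgB hgB3 hS hlip he2 hc2 he2g.
have hB : 0 <= B by lra.
have hA : `|Gd c1 (h * l) - expR (h * l)| <= eta1.
  apply: (@gadget_b R U1 _ _ _ _ he1 hc1).
  rewrite normrM (gtr0_norm hh); apply: le_trans hU1; rewrite ler_pM2l //; lra.
have hp : `|pt h c1 l - l| <= delta.
  have hlB : `|l| <= B by lra.
  have := @p_err R h l B _ eta1 hh hlB hhB hA; rewrite /pt; lra.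
have hXt : forall i, (i < N)%N -> `|Gd c1 (i%:R * (h * x)) - expR (i%:R * (h * x))| <= eta1.
  move=> i hi; apply: (@gadget_b R U1 _ _ _ _ he1 hc1).
  apply: le_trans hU2.
  case/andP: hx => x0 x1.
  have hi' : i%:R <= N%:R :> R by rewrite ler_nat ltnW.
  rewrite normrM normr_nat normrM (gtr0_norm hh) ger0_norm //.
  have hx' : h * x <= h by nra.
  apply: ler_pM => //; apply: mulr_ge0 => //; exact: ltW.
have hq : `|qt N h c1 x n - x ^+ n| <= delta.
  have := @q_err R N n h x eta1 (fun i => Gd c1 (i%:R * (h * x))) hn hh hh2 hx (ltW he1) hXt.
  rewrite /qt; lra.
case/andP: hx => x0 x1.
have hxn : `|x ^+ n| <= 1 by rewrite normrX ger0_norm // exprn_ile1.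
set p := pt h c1 l; set q := qt N h c1 x n.
have hpB : `|p| <= B.
  have -> : p = l + (p - l) by ring.
  apply: (le_trans (ler_normD _ _)); lra.
have hqB : `|q| <= B.
  have -> : q = x ^+ n + (q - x ^+ n) by ring.
  apply: (le_trans (ler_normD _ _)); lra.
have hlB : `|l| <= B by lra.
have hvB : `|x ^+ n| <= B by lra.
have bnd : forall u v, `|u| <= B -> `|v| <= B ->
    [/\ `|g * (u + v)| <= S, `|g * u| <= S & `|g * v| <= S].
  move=> u v hu hv; rewrite hS !normrM (gtr0_norm hg); split.
  - have := ler_normD u v; nra.
  - nra.
  - nra.
have [b1 b2 b3] := bnd p q hpB hqB.
have [b4 b5 b6] := bnd l (x ^+ n) hlB hvB.
have e1 : `|Fn N h c1 g c2 l x n - @Pi R g p q| <= eps.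
  rewrite /Fn -/p -/q /Pi.
  have g1 := @gadget_b R S _ _ _ b1 he2 hc2.
  have g2 := @gadget_b R S _ _ _ b2 he2 hc2.
  have g3 := @gadget_b R S _ _ _ b3 he2 hc2.
  rewrite /Gd.
  set G1 := expR (2 * c2) / 2 * (1 + tanh (g * (p + q) / 2 - c2)).
  set G2 := expR (2 * c2) / 2 * (1 + tanh (g * p / 2 - c2)).
  set G3 := expR (2 * c2) / 2 * (1 + tanh (g * q / 2 - c2)).
  have hg0 : g != 0 by apply: lt0r_neq0.
  have -> : (G1 - G2 - G3 + 1) / g ^+ 2 -
      (expR (g * (p + q)) - expR (g * p) - expR (g * q) + 1) / g ^+ 2 =
      ((G1 - expR (g * (p + q))) - (G2 - expR (g * p)) - (G3 - expR (g * q))) / g ^+ 2.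
    by field.
  rewrite normrM normfV normrX (gtr0_norm hg).
  apply: le_trans he2g; rewrite ler_pM2r ?invr_gt0 ?exprn_gt0 //.
  apply: (le_trans (ler_normB _ _)).
  have : `|G1 - expR (g * (p + q)) - (G2 - expR (g * p))| <= 2 * eta2.
    apply: (le_trans (ler_normB _ _)); lra.
  lra.
have e2 : `|@Pi R g p q - @Pi R g l (x ^+ n)| <= eps.
  have := @lip_err R g S l (x ^+ n) p q hg b4 b5 b6 b1 b2 b3.
  move=> H; apply: (le_trans H); apply: le_trans hlip.
  have hE : 0 <= 2 * expR S / g.
    apply: divr_ge0; last exact: ltW.
    apply: mulr_ge0 => //; exact: expR_ge0.
  apply: ler_wpM2l => //; lra.
have e3 : `|@Pi R g l (x ^+ n) - l * x ^+ n| <= eps.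
  apply: le_trans hgB3; exact: prod_err.
have -> : Fn N h c1 g c2 l x n - l * x ^+ n =
  (Fn N h c1 g c2 l x n - @Pi R g p q) + (@Pi R g p q - @Pi R g l (x ^+ n)) + (@Pi R g l (x ^+ n) - l * x ^+ n).
  by ring.
apply: (le_trans (ler_normD _ _)).
have := ler_normD (Fn N h c1 g c2 l x n - @Pi R g p q) (@Pi R g p q - @Pi R g l (x ^+ n)).
lra.
Qed.

End Core.

Section CoreEx.
Variable R : realType.

Lemma minl (a b : R) : Num.min a b <= a. Proof. by rewrite ge_min lexx. Qed.
Lemma minr (a b : R) : Num.min a b <= b. Proof. by rewrite ge_min lexx orbT. Qed.
Lemma min_gt0 (a b : R) : 0 < a -> 0 < b -> 0 < Num.min a b.
Proof. by move=> ha hb; rewrite lt_min ha hb. Qed.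

Lemma core_exists (N : nat) (B0 eps : R) : 0 < eps -> 0 <= B0 ->
  exists h c1 g c2 : R, forall (l : nat -> R) (x : R), 0 <= x <= 1 ->
    (forall n, (n < N)%N -> `|l n| <= B0) ->
    `|\sum_(n < N) @Fn R N h c1 g c2 (l n) x n - \sum_(n < N) l n * x ^+ n| <= eps.
Proof.
move=> he hB0.
set B := B0 + 2.
have hB : 2 <= B by rewrite /B; lra.
have hN : 0 < N.+1%:R :> R by rewrite ltr0n.
set e := eps / (3 * N.+1%:R).
have he' : 0 < e by rewrite /e divr_gt0 // mulr_gt0.
have hB3 : 0 < B ^+ 3 by apply: exprn_gt0; lra.
set g := Num.min (1 / (2 * B)) (e / (6 * B ^+ 3)).
have hg : 0 < g by apply: min_gt0; [apply: divr_gt0; lra | apply: divr_gt0 => //; lra].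
have hgB : g * B <= 1/2.
  have : g <= 1 / (2 * B) by apply: minl.
  rewrite ler_pdivlMr; last lra.
  move=> H; nra.
have hgB3 : 6 * g * B ^+ 3 <= e.
  have : g <= e / (6 * B ^+ 3) by apply: minr.
  rewrite ler_pdivlMr; last nra.
  move=> H; nra.
set S := 2 * g * B.
have hES : 0 < expR S by apply: expR_gt0.
set delta := Num.min 1 (e * g / (4 * expR S)).
have hd0 : 0 < delta by apply: min_gt0 => //; apply: divr_gt0; [apply: mulr_gt0 | nra].
have hd1 : delta <= 1 by apply: minl.
have hlip : 2 * expR S / g * (2 * delta) <= e.
  have : delta <= e * g / (4 * expR S) by apply: minr.
  rewrite ler_pdivlMr; last nra.
  move=> H.
  have -> : 2 * expR S / g * (2 * delta) = (delta * (4 * expR S)) / g.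
    by field; apply: lt0r_neq0.
  by rewrite ler_pdivrMr.
set eta2 := e * g ^+ 2 / 3.
have he2 : 0 < eta2 by rewrite /eta2 divr_gt0 // mulr_gt0 // exprn_gt0.
have he2g : 3 * eta2 / g ^+ 2 <= e.
  have -> : 3 * eta2 / g ^+ 2 = e by rewrite /eta2; field; apply: lt0r_neq0.
  exact: lexx.
set c2 := S - ln eta2 / 2.
have h2N : 0 < 2 * N.+1%:R * 2 ^+ N :> R by apply: mulr_gt0; [lra | apply: exprn_gt0].
set h := Num.min (1 / (2 * B)) (Num.min (delta / (4 * B ^+ 2)) (delta / (2 * N.+1%:R * 2 ^+ N))).
have hB2 : 0 < B ^+ 2 by apply: exprn_gt0; lra.
have hh : 0 < h.
  apply: min_gt0; first by apply: divr_gt0; lra.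
  by apply: min_gt0; apply: divr_gt0 => //; lra.
have hhB : h * B <= 1/2.
  have : h <= 1 / (2 * B) by apply: minl.
  rewrite ler_pdivlMr; last lra.
  move=> H; nra.
have hh2 : h <= 1/2 by nra.
have hhB2 : 2 * h * B ^+ 2 <= delta / 2.
  have : h <= delta / (4 * B ^+ 2) by apply: (le_trans (minr _ _)); apply: minl.
  rewrite ler_pdivlMr; last lra.
  move=> H; nra.
have hhN : N.+1%:R * 2 ^+ N * h <= delta / 2.
  have : h <= delta / (2 * N.+1%:R * 2 ^+ N) by apply: (le_trans (minr _ _)); apply: minr.
  rewrite ler_pdivlMr //.
  move=> H; nra.
have hh2' : 0 < h / 2 by apply: divr_gt0.
set eta1 := delta / 2 * Num.min h ((h / 2) ^+ N).
have he1 : 0 < eta1.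
  by apply: mulr_gt0; [apply: divr_gt0 | apply: min_gt0 => //; apply: exprn_gt0].
have he1h : eta1 / h <= delta / 2.
  rewrite ler_pdivrMr // /eta1 ler_pM2l; first exact: minl.
  exact: divr_gt0.
set U1 := h * B + N%:R * h.
have hNh : 0 <= N%:R * h by apply: mulr_ge0 => //; apply: ltW.
have hhB0 : 0 <= h * B by apply: mulr_ge0; lra.
have hU1 : h * B <= U1 by rewrite /U1; lra.
have hU2 : N%:R * h <= U1 by rewrite /U1; lra.
set c1 := U1 - ln eta1 / 2.
exists h, c1, g, c2 => l x hx hl.
rewrite -sumrB.
apply: (le_trans (ler_norm_sum _ _ _)).
apply: (@le_trans _ _ (\sum_(n < N) (3 * e))).
  apply: ler_sum => n _.
  have hn := ltn_ord n.
  have hln : `|l n| <= B - 2 by rewrite /B; have := hl n hn; lra.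
  have hnh : n%:R * 2 ^+ n * h <= delta / 2.
    apply: le_trans hhN; apply: ler_wpM2r; first exact: ltW.
    apply: ler_pM => //; first by rewrite ler_nat; apply: ltnW; apply: (ltn_trans hn).
    by apply: ler_weXn2l; [lra | apply: ltnW].
  have he1n : (h ^+ n)^-1 * 2 ^+ n * eta1 <= delta / 2.
    have : eta1 <= delta / 2 * (h / 2) ^+ N.
      rewrite /eta1 ler_pM2l; first exact: minr.
      exact: divr_gt0.
    move=> H.
    have hp : 0 < (h ^+ n)^-1 * 2 ^+ n by apply: mulr_gt0; [rewrite invr_gt0 exprn_gt0 | apply: exprn_gt0].
    apply: (le_trans (ler_wpM2l (ltW hp) H)).
    have -> : (h / 2) ^+ N = (h / 2) ^+ n * (h / 2) ^+ (N - n).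
      by rewrite -exprD subnKC // ltnW.
    have -> : (h ^+ n)^-1 * 2 ^+ n * (delta / 2 * ((h / 2) ^+ n * (h / 2) ^+ (N - n)))
       = delta / 2 * (h / 2) ^+ (N - n).
      rewrite exprMn exprVn; field.
      apply/andP; split; apply: lt0r_neq0 => //; apply: exprn_gt0 => //.
    rewrite ger_pMr; last exact: divr_gt0.
    by apply: exprn_ile1; [apply: ltW | lra].
  have hd : 0 <= delta <= 1 by rewrite hd1 ltW.
  exact: (@Fn_err R N n h c1 g c2 (l n) x B delta eta1 eta2 U1 S e hn hx hln hB hh hh2 hhB hhB2
     hnh hd he1 he1h he1n hU1 hU2 erefl hg hgB hgB3 erefl hlip he2 erefl he2g).
rewrite sumr_const card_ord /e.
rewrite -[_ *+ N]mulr_natr.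
have -> : 3 * (eps / (3 * N.+1%:R)) * N%:R = eps * (N%:R / N.+1%:R).
  by field; apply: lt0r_neq0.
rewrite ger_pMr // ler_pdivrMr // mul1r ler_nat //.
Qed.

End CoreEx.

Section Net.
Variable R : realType.

Lemma eval_act n m (M : 'M[R]_(m, n)) (b : 'cV[R]_m) v i :
  eval_layer (Layer M (Some b) true) v i 0 = tanh (\sum_j M i j * v j 0 + b i 0).
Proof. by rewrite /eval_layer /= !mxE. Qed.

Lemma eval_lin n m (M : 'M[R]_(m, n)) (b : 'cV[R]_m) v i :
  eval_layer (Layer M (Some b) false) v i 0 = \sum_j M i j * v j 0 + b i 0.
Proof. by rewrite /eval_layer /= !mxE. Qed.

Lemma sum_delta N (n : 'I_N) (c : R) (f : 'I_N -> R) :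
  \sum_(j < N) (if (j == n :> nat) then c else 0) * f j = c * f n.
Proof.
rewrite (bigD1 n) //= eqxx big1 ?addr0 // => j hj.
by rewrite ifF ?mul0r //; apply/negbTE.
Qed.

Variables (K N : nat) (beta : nat -> nat -> R) (h c1 g c2 : R).

Definition M1 : 'M[R]_(N + N, K.+1) := \matrix_(i, j)
  (if (i < N)%N then (if (j < K)%N then h / 2 * beta i j else 0)
   else (if (j < K)%N then 0 else (i - N)%N%:R * h / 2)).
Definition L1 : layer R K.+1 (N + N) := Layer M1 (Some (const_mx (- c1))) true.

Definition cq (n i : nat) : R := (h ^+ n)^-1 * 'C(n, i)%:R * ((-1) ^+ (n - i) * (expR (2 * c1) / 2)).

Definition M2 : 'M[R]_(N + N, N + N) := \matrix_(i, j)
  (if (i < N)%N then (if (j < N)%N then (if (j == i :> nat) then expR (2 * c1) / 2 / h else 0) else 0)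
   else (if (j < N)%N then 0 else cq (i - N)%N (j - N)%N)).
Definition b2 : 'cV[R]_(N + N) := \col_i
  (if (i < N)%N then (expR (2 * c1) / 2 - 1) / h else \sum_(j < N) cq (i - N)%N j).
Definition L2 : layer R (N + N) (N + N) := Layer M2 (Some b2) false.

Definition M3 : 'M[R]_(N + N + N, N + N) := \matrix_(i, j)
  (if (i < N)%N then
     (if (j < N)%N then (if (j == i :> nat) then g / 2 else 0)
      else (if ((j - N)%N == i :> nat) then g / 2 else 0))
   else if (i < N + N)%N then
     (if (j < N)%N then (if (j == (i - N)%N :> nat) then g / 2 else 0) else 0)
   else
     (if (j < N)%N then 0 else (if ((j - N)%N == (i - (N + N))%N :> nat) then g / 2 else 0))).
Definition L3 : layer R (N + N) (N + N + N) := Layer M3 (Some (const_mx (- c2))) true.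

Definition M4 : 'M[R]_(1, N + N + N) := \matrix_(i, j)
  (if (j < N)%N then expR (2 * c2) / 2 / g ^+ 2 else - (expR (2 * c2) / 2 / g ^+ 2)).
Definition L4 : layer R (N + N + N) 1 :=
  Layer M4 (Some (const_mx (N%:R * (1 - expR (2 * c2) / 2) / g ^+ 2))) false.

Definition Net : mlp R K.+1 1 :=
  mlp_cons L1 (mlp_cons L2 (mlp_cons L3 (mlp_one L4))).

Lemma Net_weights : num_weights Net =
  ((N + N) * K.+1 + (N + N) + ((N + N) * (N + N) + (N + N)) +
   ((N + N + N) * (N + N) + (N + N + N)) + (1 * (N + N + N) + 1))%N.
Proof. by rewrite /= /layer_weights /= !addnA. Qed.

Section L3.
Variable w : 'cV[R]_(N + N).
Let p (n : 'I_N) := w (lshift N n) 0.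
Let q (n : 'I_N) := w (rshift N n) 0.
Let y3 := eval_layer L3 w.

Lemma y3P (n : 'I_N) : y3 (lshift N (lshift N n)) 0 = tanh (g * (p n + q n) / 2 - c2).
Proof.
have hn := ltn_ord n.
rewrite /y3 /L3 eval_act big_split_ord /=.
have t1 : forall j : 'I_N, M3 (lshift N (lshift N n)) (lshift N j) = if (j == n :> nat) then g / 2 else 0.
  by move=> j; rewrite /M3 mxE /= !ltn_ord.
have t2 : forall j : 'I_N, M3 (lshift N (lshift N n)) (rshift N j) = if (j == n :> nat) then g / 2 else 0.
  move=> j; rewrite /M3 mxE /= ltn_ord (_ : (N + j < N)%N = false); last lia.
  by rewrite (_ : (N + j - N)%N = j) //; lia.
under eq_bigr => j _ do rewrite t1.
under [X in _ + X + _]eq_bigr => j _ do rewrite t2.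
rewrite (@sum_delta N n (g / 2) (fun j => w (lshift N j) 0)).
rewrite (@sum_delta N n (g / 2) (fun j => w (rshift N j) 0)).
rewrite mxE /=; congr tanh; rewrite /p /q; ring.
Qed.

Lemma y3Q (n : 'I_N) : y3 (lshift N (rshift N n)) 0 = tanh (g * p n / 2 - c2).
Proof.
have hn := ltn_ord n.
rewrite /y3 /L3 eval_act big_split_ord /=.
have t1 : forall j : 'I_N, M3 (lshift N (rshift N n)) (lshift N j) = if (j == n :> nat) then g / 2 else 0.
  move=> j; rewrite /M3 mxE /= ltn_ord (_ : (N + n < N)%N = false); last lia.
  rewrite (_ : (N + n < N + N)%N = true); last lia.
  by rewrite (_ : (N + n - N)%N = n) //; lia.
have t2 : forall j : 'I_N, M3 (lshift N (rshift N n)) (rshift N j) = 0.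
  move=> j; rewrite /M3 mxE /= (_ : (N + j < N)%N = false); last lia.
  rewrite (_ : (N + n < N)%N = false); last lia.
  by rewrite (_ : (N + n < N + N)%N = true) //; lia.
under eq_bigr => j _ do rewrite t1.
under [X in _ + X + _]eq_bigr => j _ do rewrite t2 mul0r.
rewrite [X in _ + X + _]big1 // addr0.
rewrite (@sum_delta N n (g / 2) (fun j => w (lshift N j) 0)).
rewrite mxE /=; congr tanh; rewrite /p; ring.
Qed.

Lemma y3R (n : 'I_N) : y3 (rshift (N + N) n) 0 = tanh (g * q n / 2 - c2).
Proof.
have hn := ltn_ord n.
rewrite /y3 /L3 eval_act big_split_ord /=.
have t1 : forall j : 'I_N, M3 (rshift (N + N) n) (lshift N j) = 0.
  move=> j; rewrite /M3 mxE /= ltn_ord (_ : (N + N + n < N)%N = false); last lia.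
  by rewrite (_ : (N + N + n < N + N)%N = false) //; lia.
have t2 : forall j : 'I_N, M3 (rshift (N + N) n) (rshift N j) = if (j == n :> nat) then g / 2 else 0.
  move=> j; rewrite /M3 mxE /= (_ : (N + j < N)%N = false); last lia.
  rewrite (_ : (N + N + n < N)%N = false); last lia.
  rewrite (_ : (N + N + n < N + N)%N = false); last lia.
  rewrite (_ : (N + j - N)%N = j); last lia.
  by rewrite (_ : (N + N + n - (N + N))%N = n) //; lia.
under eq_bigr => j _ do rewrite t1 mul0r.
under [X in _ + X + _]eq_bigr => j _ do rewrite t2.
rewrite [X in X + _ + _]big1 // add0r.
rewrite (@sum_delta N n (g / 2) (fun j => w (rshift N j) 0)).
rewrite mxE /=; congr tanh; rewrite /q; ring.
Qed.

End L3.

Section Eval.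
Variable v : 'cV[R]_K.+1.
Let a (k : 'I_K) := v (widen_ord (leqnSn K) k) 0.
Let x := v ord_max 0.
Let l (n : nat) := \sum_(k < K) beta n k * a k.

Let y1 := eval_layer L1 v.

Lemma y1L (n : 'I_N) : y1 (lshift N n) 0 = tanh (h * l n / 2 - c1).
Proof.
rewrite /y1 /L1 eval_act big_ord_recr /=.
rewrite [M1 _ ord_max]mxE /= ltn_ord ltnn mul0r addr0 mxE.
under eq_bigr => j _ do rewrite mxE /= !ltn_ord.
congr tanh; rewrite /l mulr_sumr mulr_suml.
congr (_ - _); apply: eq_bigr => j _; rewrite /a; ring.
Qed.

Lemma y1R (n : 'I_N) : y1 (rshift N n) 0 = tanh (n%:R * (h * x) / 2 - c1).
Proof.
rewrite /y1 /L1 eval_act big_ord_recr /=.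
rewrite [M1 _ ord_max]mxE /= ltnn mxE.
under eq_bigr => j _ do rewrite mxE /= ltn_ord.
have -> : (N + n < N)%N = false by lia.
have -> : (N + n - N)%N = n by lia.
rewrite big1 ?add0r; last by move=> j _; rewrite mul0r.
congr tanh; rewrite /x; ring.
Qed.


Let y2 := eval_layer L2 y1.

Lemma y2L (n : 'I_N) : y2 (lshift N n) 0 = @pt R h c1 (l n).
Proof.
rewrite /y2 /L2 eval_lin big_split_ord /=.
under eq_bigr => j _ do rewrite /M2 mxE /= !ltn_ord.
rewrite [X in _ + X + _]big1; last first.
  move=> j _; rewrite /M2 mxE /= ltn_ord.
  by rewrite (_ : (N + j < N)%N = false) ?mul0r //; lia.
rewrite addr0 (@sum_delta N n (expR (2 * c1) / 2 / h) (fun j => y1 (lshift N j) 0)).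
rewrite y1L /b2 mxE /= ltn_ord /pt /Gd.
ring.
Qed.

Lemma y2R (n : 'I_N) : y2 (rshift N n) 0 = @qt R N h c1 x n.
Proof.
rewrite /y2 /L2 eval_lin big_split_ord /=.
rewrite [X in X + _ + _]big1; last first.
  move=> j _; rewrite /M2 mxE /= ltn_ord.
  by rewrite (_ : (N + n < N)%N = false) ?mul0r //; lia.
rewrite add0r.
have e1 : (N + n - N)%N = n by lia.
have term : forall j : 'I_N, M2 (rshift N n) (rshift N j) = cq n j.
  move=> j; rewrite /M2 mxE /=.
  rewrite (_ : (N + n < N)%N = false); last lia.
  rewrite (_ : (N + j < N)%N = false); last lia.
  by rewrite e1 (_ : (N + j - N)%N = j) //; lia.
under eq_bigr => j _ do rewrite term y1R.
rewrite /b2 mxE /= (_ : (N + n < N)%N = false); last lia.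
rewrite e1 -big_split /qt mulr_sumr; apply: eq_bigr => j _.
rewrite /cq /Gd /=; ring.
Qed.

Lemma Net_eval : eval_mlp Net v 0 0 = \sum_(n < N) @Fn R N h c1 g c2 (l n) x n.
Proof.
rewrite /Net /= -/y1 -/y2 /L4 eval_lin big_split_ord big_split_ord /=.
have t1 : forall j : 'I_N, M4 0 (lshift N (lshift N j)) = expR (2 * c2) / 2 / g ^+ 2.
  by move=> j; rewrite /M4 mxE /= ltn_ord.
have t2 : forall j : 'I_N, M4 0 (lshift N (rshift N j)) = - (expR (2 * c2) / 2 / g ^+ 2).
  by move=> j; rewrite /M4 mxE /= (_ : (N + j < N)%N = false) //; lia.
have t3 : forall j : 'I_N, M4 0 (rshift (N + N) j) = - (expR (2 * c2) / 2 / g ^+ 2).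
  by move=> j; rewrite /M4 mxE /= (_ : (N + N + j < N)%N = false) //; lia.
under eq_bigr => j _ do rewrite t1 y3P.
under [X in _ + X + _ + _]eq_bigr => j _ do rewrite t2 y3Q.
under [X in _ + X + _]eq_bigr => j _ do rewrite t3 y3R.
rewrite mxE.
have -> : N%:R * (1 - expR (2 * c2) / 2) / g ^+ 2 = \sum_(j < N) (1 - expR (2 * c2) / 2) / g ^+ 2.
  by rewrite sumr_const card_ord -[_ *+ N]mulr_natl; ring.
rewrite -!big_split /=; apply: eq_bigr => j _.
rewrite y2L y2R /Fn /Gd; ring.
Qed.
End Eval.
End Net.

Lemma sin_coeff_scale (R : realType) (c x : R) n :
  sin_coeff (c * x) n = sin_coeff c n * x ^+ n.
Proof. by rewrite /sin_coeff /= exprMn; ring. Qed.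

Lemma series_sin (R : realType) (y : R) N :
  series (sin_coeff y) N = \sum_(n < N) sin_coeff y n.
Proof. by rewrite /series /= big_mkord. Qed.

Lemma weights_nat (K N : nat) : (1 <= N)%N -> (1 <= K)%N ->
  ((N + N) * K.+1 + (N + N) + ((N + N) * (N + N) + (N + N)) +
   ((N + N + N) * (N + N) + (N + N + N)) + (1 * (N + N + N) + 1) <= 25 * (N + K) ^ 2)%N.
Proof. move=> hN hK; nia. Qed.

Lemma theorem3_aux (R : realType) (A : R) (hA : 0 < A) :
  exists C : R, forall (K : nat), (1 <= K)%N -> forall eps : R, 0 < eps < 1 ->
    exists N : mlp R K.+1 1,
      (num_weights N)%:R <= C * ((K%:R) ^+ 2 + K%:R * (ln (K%:R / eps)) ^+ 2) /\
      forall v : 'cV[R]_K.+1,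
        (forall k : 'I_K, `|v (widen_ord (leqnSn K) k) 0| <= A) ->
        0 <= v ord_max 0 <= 1 ->
        `|eval_mlp N v 0 0 - Rsum (fun k : 'I_K => v (widen_ord (leqnSn K) k) 0) (v ord_max 0)| <= eps.
Proof.
set e := expR (1 : R).
have he : 0 < e by apply: expR_gt0.
set alpha := `|ln (4 * A)|.
set beta := 8 * e + alpha + 1.
have hal : 0 <= alpha by apply: normr_ge0.
exists (50 * (beta + 1) ^+ 2).
move=> K hK eps /andP[he0 he1].
have hK1 : 1 <= K%:R :> R by rewrite ler1n.
have hKe : 1 < K%:R / eps by rewrite ltr_pdivlMr // mul1r; lra.
set L := ln (K%:R / eps).
have hL : 0 <= L by apply: ln_ge0; lra.
set z := 4 * K%:R * A / eps.
have hz : 0 < z by rewrite /z; apply: divr_gt0 => //; apply: mulr_gt0 => //; lra.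
set r := 8 * e * K%:R + `|ln z|.
have hr : 0 <= r by rewrite /r; apply: addr_ge0 => //; apply: mulr_ge0; lra.
set N := (Num.trunc r).+1.
have hNr : r < N%:R by apply: truncnS_gt.
have hNr2 : N%:R <= r + 1.
  rewrite /N -addn1 natrD; apply: lerD => //; by rewrite truncn_le.
pose bc : nat -> nat -> R := fun n k => sin_coeff (2 * pi * (k.+1)%:R) n.
set B0 := \sum_(n < N) \sum_(k < K) `|bc n k| * A.
have hB0 : 0 <= B0.
  apply: sumr_ge0 => n _; apply: sumr_ge0 => k _; apply: mulr_ge0 => //; exact: ltW.
have he2 : 0 < eps / 2 by apply: divr_gt0.
have [h [c1 [g [c2 Hcore]]]] := @core_exists R N B0 (eps / 2) he2 hB0.
exists (Net R K N bc h c1 g c2); split.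
-
  rewrite Net_weights.
  have hN1 : (1 <= N)%N by [].
  have hw := @weights_nat K N hN1 hK.
  have hw' := hw; rewrite -(ler_nat R) in hw'.
  apply: (le_trans hw').
  rewrite natrM natrX natrD.
  have hlz : `|ln z| <= alpha + L.
    have -> : z = (4 * A) * (K%:R / eps) by rewrite /z; ring.
    rewrite lnM ?posrE; last 2 first.
      by apply: mulr_gt0.
      lra.
    apply: (le_trans (ler_normD _ _)); rewrite (ger0_norm hL) /alpha; exact: lexx.
  have hNK : N%:R + K%:R <= (beta + 1) * (K%:R + L).
    have : alpha <= alpha * K%:R by rewrite ler_peMr.
    rewrite /beta /r in hNr2 *; nra.
  have h0 : 0 <= N%:R + K%:R :> R by [].
  have hsq : (N%:R + K%:R) ^+ 2 <= ((beta + 1) * (K%:R + L)) ^+ 2.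
    by apply: lerXn2r => //; rewrite nnegrE //; apply: le_trans hNK.
  have hKL : (K%:R + L) ^+ 2 <= 2 * (K%:R ^+ 2 + K%:R * L ^+ 2).
    have : L ^+ 2 <= K%:R * L ^+ 2 by rewrite ler_peMl // exprn_ge0.
    have := sqr_ge0 (K%:R - L).
    move=> H1 H2; have -> : (K%:R + L) ^+ 2 = 2 * (K%:R ^+ 2 + L ^+ 2) - (K%:R - L) ^+ 2 by ring.
    lra.
  have hb : 0 <= (beta + 1) ^+ 2 by apply: sqr_ge0.
  rewrite exprMn in hsq.
  have : (beta + 1) ^+ 2 * (K%:R + L) ^+ 2 <= (beta + 1) ^+ 2 * (2 * (K%:R ^+ 2 + K%:R * L ^+ 2)).
    by apply: ler_wpM2l.
  rewrite [25%:R]/=; nra.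
- move=> v hv hx.
  rewrite Net_eval /=.
  set a := fun k : 'I_K => v (widen_ord (leqnSn K) k) 0.
  set x := v ord_max 0.
  set l := fun n : nat => \sum_(k < K) bc n k * a k.
  have hl : forall n, (n < N)%N -> `|l n| <= B0.
    move=> n hn.
    apply: (@le_trans _ _ (\sum_(k < K) `|bc n k| * A)).
      apply: (le_trans (ler_norm_sum _ _ _)); apply: ler_sum => k _.
      by rewrite normrM; apply: ler_wpM2l => //; apply: hv.
    rewrite /B0 (bigD1 (Ordinal hn)) //= lerDl.
    apply: sumr_ge0 => i _; apply: sumr_ge0 => k _; apply: mulr_ge0 => //; exact: ltW.
  have H1 := Hcore l x hx hl.
  have H2 : `|\sum_(n < N) l n * x ^+ n - Rsum a x| <= eps / 2.
    have -> : \sum_(n < N) l n * x ^+ n =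
        \sum_(k < K) a k * series (sin_coeff (2 * pi * (k.+1)%:R * x)) N.
      rewrite /l; under eq_bigr do rewrite mulr_suml.
      rewrite exchange_big /=; apply: eq_bigr => k _.
      rewrite series_sin mulr_sumr; apply: eq_bigr => n _.
      rewrite /bc [in RHS]sin_coeff_scale; ring.
    rewrite /Rsum -sumrB.
    apply: (le_trans (ler_norm_sum _ _ _)).
    have hpi : pi <= 4 :> R by have := @pihalf_lt2 R; lra.
    have hpi0 : 0 <= pi :> R by apply: pi_ge0.
    case/andP: hx => x0 x1.
    have hexp : expR (e * (8 * K%:R) - N%:R) <= z^-1.
      rewrite -[z in X in _ <= X]lnK ?posrE // -expRN ler_expR.
      have := ler_norm (ln z); rewrite /r in hNr; lra.
    apply: (@le_trans _ _ (\sum_(k < K) A * (2 * z^-1))).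
      apply: ler_sum => k _.
      rewrite -mulrBr normrM; apply: ler_pM => //; first by apply: hv.
      rewrite distrC; apply: (le_trans (sin_taylor _ _ _)).
      rewrite ler_pM2l //; apply: le_trans hexp; rewrite ler_expR lerD2r ler_pM2l //.
      have hk : (k.+1)%:R <= K%:R :> R by rewrite ler_nat.
      have hk0 : 0 <= (k.+1)%:R :> R by [].
      rewrite ger0_norm; last by apply: mulr_ge0 => //; apply: mulr_ge0 => //; apply: mulr_ge0.
      have t1 : 2 * pi <= 8 :> R by lra.
      have t2 : 2 * pi * (k.+1)%:R <= 8 * K%:R :> R.
        by apply: ler_pM => //; apply: mulr_ge0.
      have t3 : 0 <= 2 * pi * (k.+1)%:R :> R by apply: mulr_ge0 => //; apply: mulr_ge0.
      have x1' : x <= 1 by [].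
      have := ler_wpM2l t3 x1'; rewrite mulr1; lra.
    rewrite sumr_const card_ord /z -[_ *+ K]mulr_natl.
    have hK0 : K%:R != 0 :> R by apply: lt0r_neq0; lra.
    have hA0 : A != 0 by apply: lt0r_neq0.
    have he0' : eps != 0 by apply: lt0r_neq0.
    have -> : K%:R * (A * (2 / (4 * K%:R * A / eps))) = eps / 2 by field; rewrite hK0 hA0 he0'.
    exact: lexx.
  have -> : \sum_(n < N) Fn R N h c1 g c2 (l n) x n - Rsum a x =
    (\sum_(n < N) Fn R N h c1 g c2 (l n) x n - \sum_(n < N) l n * x ^+ n) +
    (\sum_(n < N) l n * x ^+ n - Rsum a x) by ring.
  apply: (le_trans (ler_normD _ _)); lra.
Qed.

End Aux.

(* Input vector v : 'cV_(K+1) encodes (a_1,...,a_K,x): a_{k+1} = v (widen k) 0,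
   x = v ord_max 0. The O(.) constant C may depend on A only. *)
Theorem theorem3 (R : realType) (A : R) (hA : 0 < A) :
  exists C : R, forall (K : nat), (1 <= K)%N -> forall eps : R, 0 < eps < 1 ->
    exists N : mlp R K.+1 1,
      (num_weights N)%:R <= C * ((K%:R) ^+ 2 + K%:R * (ln (K%:R / eps)) ^+ 2) /\
      forall v : 'cV[R]_K.+1,
        (forall k : 'I_K, `|v (widen_ord (leqnSn K) k) 0| <= A) ->
        0 <= v ord_max 0 <= 1 ->
        `|eval_mlp N v 0 0 - Rsum (fun k : 'I_K => v (widen_ord (leqnSn K) k) 0) (v ord_max 0)| <= eps.
Proof. exact: (@Aux.theorem3_aux R A hA). Qed.
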